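(* Let $m=p_1^{a_1}\cdots p_k^{a_k}$ be a positive integer. Then $$\mathbb{E}(\mathbb{X}(m))=\begin{cases}\prod_{j=1}^k(1-\delta_{p_j})=\prod_{\substack{p\equiv1\bmod3\\ p\mid m}}\frac{p}{p+2}&\text{if } m \text{ is a cube},\\ 0&\text{otherwise}.\end{cases}$$ Furthermore, $\sum_{m=1}^\infty\mathbb{E}\left(\frac{\mathbb{X}(m)}{m}\right)\le\zeta(3)$ and $\sum_{m=1}^\infty\mathrm{Var}\left(\frac{\mathbb{X}(m)}{m}\right)\le\zeta(6)$.
   Context: The $\mathbb{X}(p)$, $p$ prime, are independent random variables, with $\mathbb{X}(p)=0$ with probability $\delta_p$ and $\mathbb{X}(p)$ equal to each of $1,\omega_3,\omega_3^2$ ($\omega_3=e^{2\pi i/3}$) with probability $\frac{1-\delta_p}{3}$, where $\delta_p=0$ if $p\equiv2\pmod3$ or $p=3$, and $\delta_p=\frac{2}{p+2}$ if $p\equiv1\pmod3$. $\mathbb{X}$ is extended completely multiplicatively: $\mathbb{X}(p_1^{a_1}\cdots p_k^{a_k})=\mathbb{X}(p_1)^{a_1}\cdots\mathbb{X}(p_k)^{a_k}$. *)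

(* Defs.v *)
From HB Require Import structures.
From mathcomp Require Import all_boot all_order all_algebra.
From mathcomp Require Import all_classical all_reals.
From mathcomp Require Import ereal topology normedtype sequences measure probability.
From mathcomp Require Import complex.
Set Implicit Arguments. Unset Strict Implicit. Unset Printing Implicit Defensive.
Import Order.TTheory GRing.Theory Num.Theory numFieldNormedType.Exports.
Local Open Scope ring_scope.
Local Open Scope complex_scope.
Local Open Scope classical_set_scope.

Section Defs.
Variable R : realType.
Local Notation C := R[i].

Definition omega3 : C := (- (1 / 2)) +i* (Num.sqrt 3 / 2).

Definition Xvals : seq C := [:: 0; 1; omega3; omega3 ^+ 2].

Definition delta (p : nat) : R :=
  if (p %% 3 == 1)%N then 2 / ((p%:R : R) + 2) else 0.

Definition zeta (s : nat) : R := limn (fun N => \sum_(1 <= n < N) (n%:R ^- s : R)).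

Definition Xmul (T : Type) (X : nat -> T -> C) (m : nat) (t : T) : C :=
  \prod_(p <- primes m) X p t ^+ logn p m.

Variables (d : measure_display) (T : measurableType d) (P : probability T R).

Definition probeq (Z : T -> C) (v : C) : C := (fine (P [set t | Z t = v]))%:C.

(* expectation of a discrete random variable Z taking its values in the
   finite list vs:  E(Z) = sum_v v P(Z = v) *)
Definition cexpect (vs : seq C) (Z : T -> C) : C :=
  \sum_(v <- undup vs) v * probeq Z v.

Definition cvar (vs : seq C) (Z : T -> C) : C :=
  \sum_(v <- undup vs) `|v - cexpect vs Z| ^+ 2 * probeq Z v.

Definition Xmvals (m : nat) : seq C := [seq v / m%:R | v <- Xvals].

End Defs.

(* Main.v *)
Require Import Defs.
From HB Require Import structures.
From mathcomp Require Import all_boot all_order all_algebra.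
From mathcomp Require Import all_classical all_reals.
From mathcomp Require Import ereal topology normedtype sequences measure probability.
From mathcomp Require Import complex.
From mathcomp Require Import ring lra.
Import Order.TTheory GRing.Theory Num.Theory numFieldNormedType.Exports.
Set Implicit Arguments. Unset Strict Implicit. Unset Printing Implicit Defensive.
Local Open Scope ring_scope.
Local Open Scope complex_scope.
Local Open Scope classical_set_scope.
Lemma expn_prod_seq (s : seq nat) (F : nat -> nat) k :
  ((\prod_(i <- s) F i) ^ k = \prod_(i <- s) F i ^ k)%N.
Proof.
elim: s => [|x s IH]; first by rewrite !big_nil exp1n.
by rewrite !big_cons expnMn IH.
Qed.

Lemma cubeP m : (0 < m)%N ->
  (exists n, m = n ^ 3)%N <-> all (fun p => 3 %| logn p m)%N (primes m).
Proof.
move=> m0; split.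
  by case=> n ->; apply/allP => p _; rewrite lognX dvdn_mulr.
move=> /allP h; exists (\prod_(p <- primes m) p ^ (logn p m %/ 3))%N.
rewrite expn_prod_seq {1}(prod_prime_decomp m0) prime_decompE big_map /=.
apply: eq_big_seq => p pin; rewrite -expnM divnK //.
exact: h.
Qed.
Section W.
Variable R : realType.
Local Notation C := R[i].
Local Notation w := (omega3 R).
Local Notation s := (Num.ExtraDef.sqrtr (3:R)).
Lemma s3 : s * s = 3.
Proof. by rewrite -expr2 sqr_sqrtr. Qed.
Lemma s_gt0 : 0 < s.
Proof. by rewrite sqrtr_gt0. Qed.
Lemma w2E : w ^+ 2 = (- (1/2)) +i* (- (s / 2)).
Proof. rewrite /omega3 expr2 /=. simpc. have h := s3.
apply/eqP; rewrite eq_complex /=; apply/andP; split; apply/eqP; nra. Qed.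
Lemma w3 : w ^+ 3 = 1.
Proof. rewrite exprS w2E /omega3. simpc. have h := s3.
apply/eqP; rewrite eq_complex /=; apply/andP; split; apply/eqP; nra. Qed.
Lemma wsum : 1 + w + w ^+ 2 = 0.
Proof. rewrite w2E /omega3. simpc.
apply/eqP; rewrite eq_complex /=; apply/andP; split; apply/eqP; lra. Qed.
Lemma wmod a : w ^+ a = w ^+ (a %% 3).
Proof. by rewrite {1}(divn_eq a 3) exprD mulnC exprM w3 expr1n mul1r. Qed.
Lemma Xvals_uniq : uniq (Xvals R).
Proof.
have hs := s_gt0.
rewrite /Xvals /= !inE w2E /omega3 !negb_or !eq_complex /= !negb_and.
repeat (apply/andP; split) => //; apply/orP.
all: try (left; apply/eqP; lra).
all: right; apply/eqP; lra.
Qed.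
Lemma Xvals_mul x y : x \in Xvals R -> y \in Xvals R -> x * y \in Xvals R.
Proof.
rewrite /Xvals !inE => /or4P[] /eqP -> /or4P[] /eqP ->;
rewrite ?mul0r ?mulr0 ?mul1r ?mulr1 ?eqxx ?orbT //.
- by rewrite -exprS w3 eqxx ?orbT.
- by rewrite -exprSr w3 eqxx ?orbT.
- by rewrite -exprD wmod /= eqxx ?orbT.
Qed.
Lemma Xvals1 : (1 : C) \in Xvals R.
Proof. by rewrite !inE eqxx orbT. Qed.
Lemma Xvals_exp x n : x \in Xvals R -> x ^+ n \in Xvals R.
Proof. move=> hx; elim: n => [|n IH]; first exact: Xvals1.
by rewrite exprS Xvals_mul. Qed.
Lemma sum_ind (c : C) (r : seq C) : uniq r ->
  \sum_(y <- r) y * (c == y)%:R = if c \in r then c else 0.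
Proof.
elim: r => [|y r IH] /=; first by rewrite big_nil.
move=> /andP[ynr ur]; rewrite big_cons IH // inE.
case: eqP => [->|ne] /=; last by rewrite mulr0 add0r.
by rewrite (negbTE ynr) mulr1 addr0.
Qed.
End W.
Section W2.
Variable R : realType.
Local Notation C := R[i].
Local Notation w := (omega3 R).
Lemma w_neq0 : w != 0.
Proof. by apply/eqP => /(congr1 (@complex.Re R)) /=; lra. Qed.
Lemma w_neq1 : w != 1.
Proof. by apply/eqP => /(congr1 (@complex.Re R)) /=; lra. Qed.
Lemma w2_neq0 : w ^+ 2 != 0.
Proof. by rewrite w2E; apply/eqP => /(congr1 (@complex.Re R)) /=; lra. Qed.
Lemma w2_neq1 : w ^+ 2 != 1.
Proof. by rewrite w2E; apply/eqP => /(congr1 (@complex.Re R)) /=; lra. Qed.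
Lemma normw : `|w| = 1.
Proof.
have h : `|w| ^+ 3 = 1 by rewrite -normrX w3 normr1.
by apply/eqP; rewrite -(@pexpr_eq1 _ _ 3) ?normr_ge0 // h.
Qed.
Lemma normC2R (r : R) : `|r%:C| ^+ 2 = (r ^+ 2)%:C.
Proof. by rewrite sqr_normc conjc_real -rmorphM expr2. Qed.
End W2.
Section Meas.
Variable R : realType.
Local Notation C := R[i].
Local Notation w := (omega3 R).
Variables (d : measure_display) (T : measurableType d) (P : probability T R).

Definition pr (A : set T) : C := (fine (P A))%:C.

Lemma pr0 : pr set0 = 0.
Proof. by rewrite /pr measure0 /= rmorph0. Qed.

Lemma prT : pr setT = 1.
Proof. by rewrite /pr probability_setT /= rmorph1. Qed.

Definition good (Z : T -> C) :=
  (forall t, Z t \in Xvals R) /\ (forall y, measurable [set t | Z t = y]).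

Lemma measurable_in (Z : T -> C) (vs : seq C) :
  (forall y, measurable [set t | Z t = y]) -> measurable [set t | Z t \in vs].
Proof.
move=> hZ; elim: vs => [|v vs IH].
  by rewrite (_ : [set t | _] = set0) //; apply/seteqP; split => t //=.
rewrite (_ : [set t | Z t \in v :: vs] = [set t | Z t = v] `|` [set t | Z t \in vs]).
  exact: measurableU.
apply/seteqP; split => t /=; rewrite inE.
  by move=> /orP[/eqP ->|h]; [left|right].
by case => [->|->]; rewrite ?eqxx ?orbT.
Qed.

Lemma P_part (Z : T -> C) (vs : seq C) (E : set T) : uniq vs ->
  (forall y, measurable [set t | Z t = y]) -> measurable E ->
  P (E `&` [set t | Z t \in vs]) = (\sum_(x <- vs) P (E `&` [set t | Z t = x]))%E.
Proof.
move=> + hZ mE; elim: vs => [|v vs IH] /=.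
  rewrite big_nil (_ : _ `&` _ = set0) ?measure0 //.
  by apply/seteqP; split => t //= [].
move=> /andP[vnvs uvs]; rewrite big_cons -IH //.
rewrite (_ : _ `&` _ = (E `&` [set t | Z t = v]) `|` (E `&` [set t | Z t \in vs])).
  rewrite measureU //; [exact: measurableI|apply: measurableI => //; exact: measurable_in|].
  apply/seteqP; split => t //= [[_ ->] [_ h]].
  by move: vnvs; rewrite h.
apply/seteqP; split => t /=; rewrite inE.
  by move=> [Et /orP[/eqP ->|h]]; [left|right].
by case => -[Et ->]; rewrite ?eqxx ?orbT.
Qed.

Lemma pr_part (Z : T -> C) (E : set T) : good Z -> measurable E ->
  pr E = \sum_(x <- Xvals R) pr (E `&` [set t | Z t = x]).
Proof.
move=> [Zv Zm] mE.
rewrite {1}(_ : E = E `&` [set t | Z t \in Xvals R]); last first.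
  by apply/seteqP; split => t //= [].
rewrite /pr P_part ?Xvals_uniq // -sum_fine; last first.
  by move=> x _; apply: fin_num_measure; apply: measurableI.
by rewrite rmorph_sum.
Qed.

Definition ES (Z : T -> C) (B : set T) : C :=
  \sum_(y <- Xvals R) y * pr ([set t | Z t = y] `&` B).

Lemma ES_const (c : C) B : c \in Xvals R -> ES (fun _ => c) B = c * pr B.
Proof.
move=> hc; rewrite /ES.
transitivity (\sum_(y <- Xvals R) y * (c == y)%:R * pr B).
  apply: eq_bigr => y _; case: eqP => [->|ne]; rewrite ?mulr1 ?mulr0 ?mul0r.
    by congr (_ * pr _); apply/seteqP; split => t /=; [case|move=> Bt; split].
  rewrite (_ : _ `&` _ = set0) ?pr0 ?mulr0 //.
  by apply/seteqP; split => t //= [] /ne.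
by rewrite -mulr_suml sum_ind ?Xvals_uniq ?hc.
Qed.

Lemma good_mulg (g : C -> C) (Z K : T -> C) : good Z -> good K ->
  {in Xvals R, forall x, g x \in Xvals R} -> good (fun t => g (Z t) * K t).
Proof.
move=> [Zv Zm] [Kv Km] hg; split => [t|y]; first by rewrite Xvals_mul ?hg.
rewrite (_ : [set t | _] = \bigcup_(x in [set` Xvals R]) \bigcup_(z in [set` Xvals R])
   (if g x * z == y then [set t | Z t = x] `&` [set t | K t = z] else set0)).
  rewrite bigcup_seq; apply: (big_ind (fun A => measurable A)) => //.
    by move=> A B mA mB; apply: measurableU.
  move=> x _; rewrite bigcup_seq; apply: (big_ind (fun A => measurable A)) => //.
    by move=> A B mA mB; apply: measurableU.
  by move=> z _; case: eqP => _ //; apply: measurableI.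
apply/seteqP; split => t /=.
  move=> h; exists (Z t); first by move: (Zv t).
  exists (K t); first by move: (Kv t).
  by rewrite h eqxx.
by case=> x /= _ [z /= _]; case: eqP => // <- [-> ->].
Qed.

Lemma ES_mul (g : C -> C) (Z K : T -> C) (B : set T) : good Z -> good K ->
  {in Xvals R, forall x, g x \in Xvals R} -> measurable B ->
  ES (fun t => g (Z t) * K t) B =
  \sum_(x <- Xvals R) g x * ES K ([set t | Z t = x] `&` B).
Proof.
move=> gZ gK hg mB.
have gZK := good_mulg gZ gK hg.
move: gZ gK => [Zv Zm] [Kv Km].
rewrite /ES.
transitivity (\sum_(y <- Xvals R) y * \sum_(x <- Xvals R) \sum_(z <- Xvals R)
   ((g x * z == y)%:R * pr ([set t | K t = z] `&` ([set t | Z t = x] `&` B)))).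
  apply: eq_bigr => y _; congr (_ * _).
  rewrite (pr_part (Z:=Z)) //; last by apply: measurableI => //; case: gZK.
  apply: eq_bigr => x _; rewrite (pr_part (Z:=K)) //; last first.
    by apply: measurableI => //; apply: measurableI => //; case: gZK.
  apply: eq_bigr => z _.
  case: eqP => [<-|ne]; rewrite ?mul1r ?mul0r.
    congr pr; apply/seteqP; split => t /=.
      by move=> [[[_ Bt] ->] ->].
    by move=> [-> [-> Bt]].
  rewrite (_ : _ `&` _ = set0) ?pr0 //.
  by apply/seteqP; split => t //= [[[h _] e1] e2]; apply: ne; rewrite -e1 -e2.
under eq_bigr => y _ do rewrite mulr_sumr.
rewrite exchange_big; apply: eq_big_seq => x xin.
under eq_bigr => y _ do rewrite mulr_sumr.
rewrite exchange_big mulr_sumr; apply: eq_big_seq => z zin.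
rewrite (eq_bigr (fun y => y * (g x * z == y)%:R *
   pr ([set t | K t = z] `&` ([set t | Z t = x] `&` B)))); last first.
  by move=> y _; rewrite mulrA.
by rewrite -mulr_suml sum_ind ?Xvals_uniq // Xvals_mul ?hg // mulrA.
Qed.

End Meas.
Section M2.
Variable R : realType.
Local Notation C := R[i].
Variables (d : measure_display) (T : measurableType d) (P : probability T R).

Lemma knz k : (0 < k)%N -> (k%:R : C) != 0.
Proof. by move=> k0; rewrite pnatr_eq0 -lt0n. Qed.

Lemma Xmvals_uniq k : (0 < k)%N -> uniq (Xmvals R k).
Proof.
move=> k0; rewrite map_inj_uniq ?Xvals_uniq //.
exact: (mulIf (invr_neq0 (knz k0))).
Qed.

Lemma probeq_div (Z : T -> C) k v : (0 < k)%N ->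
  probeq P (fun t => Z t / k%:R) (v / k%:R) = probeq P Z v.
Proof.
move=> k0; rewrite /probeq; congr ((fine (P _))%:C); apply/seteqP; split => t /=.
  by move=> /(mulIf (invr_neq0 (knz k0))).
by move=> ->.
Qed.

Lemma cexpect_div (Z : T -> C) k : (0 < k)%N ->
  cexpect P (Xmvals R k) (fun t => Z t / k%:R) = cexpect P (Xvals R) Z / k%:R.
Proof.
move=> k0; rewrite /cexpect !undup_id ?Xvals_uniq ?Xmvals_uniq // big_map mulr_suml.
by apply: eq_bigr => v _; rewrite probeq_div // mulrAC.
Qed.

Lemma cvar_div (Z : T -> C) k : (0 < k)%N ->
  cvar P (Xmvals R k) (fun t => Z t / k%:R) = cvar P (Xvals R) Z / k%:R ^+ 2.
Proof.
move=> k0; rewrite /cvar cexpect_div // !undup_id ?Xvals_uniq ?Xmvals_uniq // big_map.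
rewrite [RHS]mulr_suml; apply: eq_bigr => v _.
by rewrite probeq_div // -mulrBl normrM normfV normr_nat exprMn exprVn mulrAC.
Qed.

Lemma pr_sum1 (Z : T -> C) : good Z -> \sum_(v <- Xvals R) pr P [set t | Z t = v] = 1.
Proof.
move=> gZ; have := @pr_part _ _ _ P Z setT gZ measurableT.
rewrite prT => h; rewrite [RHS]h. apply: eq_bigr => v _; by rewrite setTI.
Qed.
End M2.
Section XS.
Variable R : realType.
Local Notation C := R[i].
Local Notation w := (omega3 R).
Variables (d : measure_display) (T : measurableType d) (P : probability T R).
Variable X : nat -> T -> C.
Hypothesis Xval : forall p t, prime p -> X p t \in Xvals R.
Hypothesis Xmeas : forall p v, prime p -> v \in Xvals R -> measurable [set t | X p t = v].
Hypothesis Xlaw0 : forall p, prime p -> P [set t | X p t = 0] = (delta R p)%:E.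
Hypothesis Xlaw : forall p v, prime p -> v \in behead (Xvals R) ->
            P [set t | X p t = v] = ((1 - delta R p) / 3)%:E.
Hypothesis Xindep : forall (s : seq nat) (v : nat -> R[i]),
     uniq s -> all prime s -> {in s, forall p, v p \in Xvals R} ->
     P (\bigcap_(p in [set p | p \in s]) [set t | X p t = v p]) =
     (\prod_(p <- s) P [set t | X p t = v p])%E.

Local Notation pr := (pr P).
Local Notation ES := (ES P).
Local Notation good := (@good R d T).

Lemma meas_X p v : prime p -> measurable [set t | X p t = v].
Proof.
move=> pp; have [vin|vnin] := boolP (v \in Xvals R); first exact: Xmeas.
rewrite (_ : [set t | _] = set0) //; apply/seteqP; split => t //= h.
by move: vnin; rewrite -h Xval.
Qed.

Lemma good_X p : prime p -> good (X p).
Proof. by move=> pp; split => [t|y]; [exact: Xval|exact: meas_X]. Qed.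

Definition Fa (a : nat -> nat) (s : seq nat) (t : T) : C := \prod_(p <- s) X p t ^+ a p.

Lemma good_F a s : all prime s -> good (Fa a s).
Proof.
elim: s => [|p s IH] /=.
  move=> _; rewrite (_ : Fa a [::] = fun _ => 1); last first.
    by apply/funext => t; rewrite /Fa big_nil.
  split => [t|y]; first exact: Xvals1.
  have [<-|ne] := eqVneq 1 y.
    by rewrite (_ : [set t | _] = setT) //; apply/seteqP; split => t //=.
  by rewrite (_ : [set t | _] = set0) //; apply/seteqP; split => t //= /eqP; rewrite (negbTE ne).
move=> /andP[pp ps].
rewrite (_ : Fa a (p :: s) = fun t => (fun x => x ^+ a p) (X p t) * Fa a s t); last first.
  by apply/funext => t; rewrite /Fa big_cons.
apply: (good_mulg (g := fun x => x ^+ a p)); [exact: good_X|exact: IH|by move=> x xin; apply: Xvals_exp].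
Qed.

Definition Bs (r : seq nat) (u : nat -> C) : set T :=
  \bigcap_(p in [set p | p \in r]) [set t | X p t = u p].

Lemma Bs_meas r u : all prime r -> measurable (Bs r u).
Proof.
move=> hr; rewrite /Bs bigcap_seq big_seq; apply: (big_ind (fun A => measurable A)) => //.
  by move=> A B mA mB; apply: measurableI.
by move=> p pin; apply: meas_X; exact: (allP hr p pin).
Qed.

Lemma pr_Bs r u : uniq r -> all prime r -> {in r, forall p, u p \in Xvals R} ->
  pr (Bs r u) = \prod_(p <- r) pr [set t | X p t = u p].
Proof.
move=> ur pr_ hu; rewrite /pr /Bs Xindep //.
rewrite (eq_big_seq (fun p => (fine (P [set t | X p t = u p]))%:E)); last first.
  move=> p pin; rewrite fineK //; apply: fin_num_measure; apply: meas_X.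
  exact: (allP pr_ p pin).
by rewrite prodEFin /= rmorph_prod.
Qed.

Lemma Bs_cons p r u x : p \notin r ->
  [set t | X p t = x] `&` Bs r u = Bs (p :: r) (fun q => if q == p then x else u q).
Proof.
move=> pnr; apply/seteqP; split => t /=.
  move=> [hx hB] q /=; rewrite inE => /orP[/eqP ->|qr]; first by rewrite eqxx.
  have qp : q != p by apply/eqP => qp; move: pnr; rewrite -qp qr.
  by rewrite (negbTE qp); apply: hB.
move=> h; split; first by have := h p; rewrite /= inE eqxx /= => ->.
move=> q /= qr; have qp : q != p by apply/eqP => qp; move: pnr; rewrite -qp qr.
by have := h q; rewrite /= inE qr orbT (negbTE qp) => ->.
Qed.

Definition Mx (a : nat -> nat) (p : nat) : C :=
  \sum_(x <- Xvals R) x ^+ a p * pr [set t | X p t = x].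

Lemma ES_F a s : forall r u, uniq (s ++ r) -> all prime (s ++ r) ->
  {in r, forall p, u p \in Xvals R} ->
  ES (Fa a s) (Bs r u) = pr (Bs r u) * \prod_(p <- s) Mx a p.
Proof.
elim: s => [|p s IH] r u /=.
  move=> _ _ _; rewrite big_nil mulr1 (_ : Fa a [::] = fun _ => 1).
    by rewrite ES_const ?mul1r //; exact: Xvals1.
  by apply/funext => t; rewrite /Fa big_nil.
move=> /andP[pnsr usr] /andP[pp psr] hu.
have pnr : p \notin r by move: pnsr; rewrite mem_cat negb_or => /andP[].
have [ps pr_] : all prime s /\ all prime r by move: psr; rewrite all_cat => /andP[].
rewrite (_ : Fa a (p :: s) = fun t => (fun x => x ^+ a p) (X p t) * Fa a s t); last first.
  by apply/funext => t; rewrite /Fa big_cons.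
rewrite (@ES_mul _ _ _ P (fun x => x ^+ a p) (X p) (Fa a s) (Bs r u)); last exact: Bs_meas.
  2: exact: good_X. 2: exact: good_F. 2: by move=> x xin; apply: Xvals_exp.
transitivity (\sum_(x <- Xvals R) x ^+ a p *
   (pr [set t | X p t = x] * pr (Bs r u) * \prod_(q <- s) Mx a q)).
  apply: eq_big_seq => x xin; congr (_ * _).
  have hu' : {in p :: r, forall q, (fun q => if q == p then x else u q) q \in Xvals R}.
    by move=> q; rewrite inE; case: eqP => //= _ qr; apply: hu.
  have a2 : all prime (s ++ p :: r) by rewrite all_cat /= pp ps pr_.
  have u2 : uniq (s ++ p :: r).
    by rewrite (uniq_catCA s [:: p] r) /= pnsr usr.
  have u3 : uniq (p :: r) by rewrite /= pnr; move: usr; rewrite cat_uniq => /and3P[].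
  have a3 : all prime (p :: r) by rewrite /= pp pr_.
  have ur : uniq r by move: usr; rewrite cat_uniq => /and3P[].
  rewrite Bs_cons // IH // !pr_Bs //.
  rewrite big_cons eqxx; congr (_ * _ * _); apply: eq_big_seq => q qr.
  have qp : q != p by apply/eqP => qp; move: pnr; rewrite -qp qr.
  by rewrite (negbTE qp).
transitivity ((\sum_(x <- Xvals R) x ^+ a p * pr [set t | X p t = x]) *
   (pr (Bs r u) * \prod_(q <- s) Mx a q)).
  by rewrite mulr_suml; apply: eq_bigr => x _; rewrite !mulrA.
by rewrite big_cons /Mx mulrCA.
Qed.

Lemma cexpect_Xmul m : cexpect P (Xvals R) (Xmul X m) =
  \prod_(p <- primes m) Mx (fun p => logn p m) p.
Proof.
have E := @ES_F (fun p => logn p m) (primes m) [::] (fun _ => 0).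
rewrite cats0 in E.
have hnil : {in [::], forall p : nat, (fun _ => 0 : C) p \in Xvals R} by [].
have E' := E (primes_uniq m) (all_prime_primes m) hnil.
rewrite (_ : Bs [::] _ = setT) in E'; last by apply/seteqP; split => t //= _ q.
rewrite prT mul1r in E'; rewrite -E'.
rewrite /cexpect undup_id ?Xvals_uniq //; apply: eq_bigr => y _.
by rewrite /probeq /pr setIT.
Qed.



Lemma Mx_val a p : prime p -> (0 < a p)%N ->
  Mx a p = if (3 %| a p)%N then (1 - delta R p)%:C else 0.
Proof.
move=> pp ap.
have h0 : pr [set t | X p t = 0] = (delta R p)%:C by rewrite /pr Xlaw0.
have hv v : v \in behead (Xvals R) ->
    pr [set t | X p t = v] = ((1 - delta R p) / 3)%:C.
  by move=> hv; rewrite /pr Xlaw.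
rewrite /Mx /Xvals !big_cons big_nil h0 !hv ?inE ?eqxx ?orbT //.
rewrite expr0n (gtn_eqF ap) mul0r add0r expr1n mul1r -exprM.
set c := ((1 - delta R p) / 3)%:C.
rewrite (wmod R (a p)) (wmod R (2 * a p)) -modnMmr.
have e1 : ((2 * 1) %% 3 = 2)%N by [].
have e2 : ((2 * 2) %% 3 = 1)%N by [].
have e0 : ((2 * 0) %% 3 = 0)%N by [].
rewrite /dvdn; move: (ltn_mod (a p) 3); case: (a p %% 3)%N => [|[|[|n]]] //= _.
- rewrite e0 expr0 !mul1r addr0 /c -!rmorphD; congr (_%:C); lra.
- rewrite e1 expr1 addr0; transitivity (c * (1 + omega3 R + omega3 R ^+ 2)).
    by ring.
  by rewrite wsum mulr0.
- rewrite e2 expr1 addr0; transitivity (c * (1 + omega3 R + omega3 R ^+ 2)).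
    by ring.
  by rewrite wsum mulr0.
Qed.

Definition all3 m := all (fun p => 3 %| logn p m)%N (primes m).

Lemma E_cube m : all3 m ->
  cexpect P (Xvals R) (Xmul X m) = (\prod_(p <- primes m) (1 - delta R p))%:C.
Proof.
move=> /allP h; rewrite cexpect_Xmul rmorph_prod; apply: eq_big_seq => p pin.
move: (pin); rewrite mem_primes => /and3P[pp _ _].
by rewrite Mx_val // ?h // logn_gt0.
Qed.

Lemma E_noncube m : ~~ all3 m -> cexpect P (Xvals R) (Xmul X m) = 0.
Proof.
case/allPn => p pin hp; rewrite cexpect_Xmul (big_rem p pin) /=.
move: (pin); rewrite mem_primes => /and3P[pp _ _].
by rewrite Mx_val // ?logn_gt0 // (negbTE hp) mul0r.
Qed.


Lemma good_Xmul k : good (Xmul X k).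
Proof. exact: (good_F (fun p => logn p k) (all_prime_primes k)). Qed.

Definition q k v : R := fine (P [set t | Xmul X k t = v]).

Lemma pq k v : probeq P (Xmul X k) v = (q k v)%:C.
Proof. by []. Qed.

Lemma q_bounds k v : 0 <= q k v <= 1.
Proof.
have mA := (good_Xmul k).2 v.
rewrite /q; apply/andP; split; first by apply: fine_ge0; apply: measure_ge0.
by rewrite -lee_fin fineK ?probability_le1 // fin_num_measure.
Qed.

Lemma q_sum k : q k 0 + (q k 1 + (q k w + q k (w ^+ 2))) = 1.
Proof.
have := pr_sum1 P (good_Xmul k).
rewrite /Xvals !big_cons big_nil /pr addr0 -!rmorphD => /(congr1 (@complex.Re R)) /=.
by [].
Qed.

Lemma cube_vals k t : all3 k -> (Xmul X k t == 0) || (Xmul X k t == 1).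
Proof.
move=> /allP h; rewrite /Xmul big_seq.
apply: (big_ind (fun z => (z == 0) || (z == 1))).
- by rewrite eqxx orbT.
- by move=> x y /orP[/eqP->|/eqP->] /orP[/eqP->|/eqP->];
    rewrite ?mul0r ?mulr0 ?mul1r ?eqxx ?orbT.
move=> p pin; have pp : prime p by move: pin; rewrite mem_primes => /and3P[].
have /dvdnP[b ->] := h p pin; rewrite mulnC exprM.
have h3 : (X p t ^+ 3 == 0) || (X p t ^+ 3 == 1).
  move: (Xval t pp); rewrite /Xvals !inE => /or4P[] /eqP ->.
  - by rewrite expr0n eqxx.
  - by rewrite expr1n eqxx orbT.
  - by rewrite w3 eqxx orbT.
  - by rewrite -exprM mulnC exprM w3 expr1n eqxx orbT.
move: h3 => /orP[/eqP->|/eqP->]; last by rewrite expr1n eqxx orbT.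
by case: b => [|b]; rewrite ?expr0 ?eqxx ?orbT // exprS mul0r eqxx.
Qed.

Lemma q_w_cube k : all3 k -> q k w = 0 /\ q k (w ^+ 2) = 0.
Proof.
move=> hk; rewrite /q.
rewrite (_ : [set t | Xmul X k t = w] = set0); last first.
  apply/seteqP; split => t //= h; have := cube_vals t hk.
  by rewrite h (negbTE (w_neq0 R)) (negbTE (w_neq1 R)).
rewrite (_ : [set t | Xmul X k t = w ^+ 2] = set0); last first.
  apply/seteqP; split => t //= h; have := cube_vals t hk.
  by rewrite h (negbTE (w2_neq0 R)) (negbTE (w2_neq1 R)).
by rewrite measure0.
Qed.

Lemma Ecube_k k : all3 k -> cexpect P (Xvals R) (Xmul X k) = (q k 1)%:C.
Proof.
move=> hk; have [h1 h2] := q_w_cube hk.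
rewrite /cexpect undup_id ?Xvals_uniq // /Xvals !big_cons big_nil !pq h1 h2.
by rewrite !rmorph0 !mulr0 mul0r mul1r !addr0 add0r.
Qed.

Definition cc k : R := if all3 k then q k 1 else 0.
Definition vv k : R := if all3 k then q k 1 * (1 - q k 1) else 1 - q k 0.

Lemma cexp_k k : (0 < k)%N ->
  cexpect P (Xmvals R k) (fun t => Xmul X k t / k%:R) = (cc k / k%:R)%:C.
Proof.
move=> k0; rewrite cexpect_div // rmorphM /= fmorphV rmorph_nat /cc.
case: ifP => h; first by rewrite Ecube_k.
by rewrite E_noncube ?h // rmorph0 mul0r.
Qed.

Lemma cvar_k k : (0 < k)%N ->
  cvar P (Xmvals R k) (fun t => Xmul X k t / k%:R) = (vv k / k%:R ^+ 2)%:C.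
Proof.
move=> k0; rewrite cvar_div // rmorphM /= fmorphV rmorphXn rmorph_nat /vv.
congr (_ / _).
have hs := q_sum k.
rewrite /cvar undup_id ?Xvals_uniq //.
case: ifP => h.
  have [h1 h2] := q_w_cube h.
  rewrite Ecube_k // /Xvals !big_cons big_nil !pq h1 h2 !rmorph0 !mulr0 !addr0.
  have q0E : q k 0 = 1 - q k 1 by move: hs; rewrite h1 h2 !addr0 => hs; lra.
  rewrite sub0r normrN normC2R q0E.
  rewrite (_ : 1 - (q k 1)%:C = (1 - q k 1)%:C); last by rewrite rmorphB rmorph1.
  rewrite normC2R.
  by rewrite -!rmorphM -rmorphD; congr (_%:C); ring.
rewrite E_noncube ?h // /Xvals !big_cons big_nil !pq !subr0 normr0 expr0n /=.
rewrite mul0r add0r normr1 expr1n mul1r normrX normw !expr1n !mul1r addr0.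
by rewrite -!rmorphD; congr (_%:C); lra.
Qed.

Lemma cc_bounds k : 0 <= cc k <= 1.
Proof. by rewrite /cc; case: ifP => _; [exact: q_bounds|rewrite lexx ler01]. Qed.

Lemma cc_cube k : cc k != 0 -> all3 k.
Proof. by rewrite /cc; case: ifP => // _; rewrite eqxx. Qed.

Lemma vv_bounds k : 0 <= vv k <= 1.
Proof.
have /andP[a b] := q_bounds k 1; have /andP[c e] := q_bounds k 0.
by rewrite /vv; case: ifP => _; apply/andP; split; nra.
Qed.

Lemma vv1 : vv 1 = 0.
Proof.
have p1 : primes 1 = [::] by [].
rewrite /vv; have -> : all3 1 by rewrite /all3 p1.
rewrite /q (_ : [set t | Xmul X 1 t = 1] = setT); last first.
  by apply/seteqP; split => t //= _; rewrite /Xmul p1 big_nil.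
by rewrite probability_setT /= subrr mulr0.
Qed.

End XS.
Section Reals.
Variable R : realType.

Lemma psum_step (s : nat) N :
  \sum_(1 <= n < N) (n%:R ^- s : R) <= \sum_(1 <= n < N.+1) (n%:R ^- s : R).
Proof.
case: N => [|N]; first by rewrite !big_geq.
by rewrite [leRHS]big_nat_recr //= lerDl invr_ge0 exprn_ge0 // ler0n.
Qed.

Lemma sum_sq N : (0 < N)%N ->
  \sum_(1 <= n < N.+1) (n%:R ^- 2 : R) <= 2 - N%:R^-1.
Proof.
elim: N => // N IH _; case: N IH => [|N] IH.
  rewrite big_nat1 (_ : (1%:R : R) = 1) // expr1n invr1; lra.
rewrite big_nat_recr //=; have {}IH := IH isT.
have ex : (N.+2%:R : R) = N.+1%:R + 1 by rewrite -addn1 natrD.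
have hx : (1 : R) <= N.+1%:R by rewrite ler1n.
rewrite ex; set x := (N.+1%:R : R) in IH hx *.
have key : ((x + 1) ^+ 2)^-1 <= x^-1 - (x + 1)^-1.
  have -> : x^-1 - (x + 1)^-1 = (x * (x + 1))^-1.
    by field; apply/andP; split; apply/negP => /eqP; lra.
  rewrite lef_pV2 ?posrE; [nra| |]; nra.
apply: le_trans (lerD IH key) _; by rewrite addrA subrK.
Qed.

Lemma zeta_le s N : (2 <= s)%N -> \sum_(1 <= n < N) (n%:R ^- s : R) <= zeta R s.
Proof.
move=> s2; set u := fun N => \sum_(1 <= n < N) (n%:R ^- s : R).
have hnd : {homo u : n m / (n <= m)%N >-> n <= m}.
  by apply/nondecreasing_seqP => n; exact: psum_step.
have hub : has_ubound (range u).
  exists 2 => _ [n _ <-].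
  apply: (le_trans (y := \sum_(1 <= k < n) (k%:R ^- 2 : R))).
    apply: ler_sum_nat => k /andP[k1 _].
    have hk : (1 : R) <= k%:R by rewrite ler1n.
    rewrite lef_pV2 ?posrE ?exprn_gt0 //; try lra.
    rewrite -(subnKC s2) exprD ler_peMr ?exprn_ge0 ?exprn_ege1 //; lra.
  case: n => [|[|n]]; first by rewrite big_geq.
    by rewrite big_geq.
  have h := @sum_sq n.+1 isT.
  apply: le_trans h _; by rewrite lerBlDr lerDl invr_ge0 ler0n.
exact: (nondecreasing_cvgn_le hnd (nondecreasing_is_cvgn hnd hub)).
Qed.

Lemma sum3 (cc : nat -> R) N : (forall k, 0 <= cc k <= 1) ->
  (forall k, cc k != 0 -> exists n, k = (n ^ 3)%N) ->
  \sum_(1 <= k < N.+1) cc k / k%:R <= zeta R 3.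
Proof.
move=> hb hc.
apply: (le_trans _ (zeta_le N.+1 (isT : (2 <= 3)%N))).
have iu : uniq (index_iota 1 N.+1) by rewrite /index_iota iota_uniq.
apply: (le_trans (y := \sum_(1 <= k < N.+1) \sum_(1 <= n < N.+1)
   ((k == (n ^ 3)%N)%:R * (n%:R ^- 3 : R)))).
  apply: ler_sum_nat => k /andP[k1 kN].
  have [c0|cn0] := eqVneq (cc k) 0.
    rewrite c0 mul0r; apply: sumr_ge0 => n _.
    by rewrite mulr_ge0 ?ler0n ?invr_ge0 ?exprn_ge0 ?ler0n.
  have [n kE] := hc k cn0.
  have n1 : (1 <= n)%N by move: k1; rewrite kE; case: n {kE}.
  have nN : (n < N.+1)%N.
    apply: (leq_ltn_trans _ kN); rewrite kE -{1}(expn1 n) leq_pexp2l //.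
  rewrite (bigD1_seq n) ?mem_index_iota ?n1 //= kE eqxx mul1r.
  apply: (le_trans (y := n%:R ^- 3)).
    rewrite natrX; apply: ler_piMl; first by rewrite invr_ge0 exprn_ge0 ?ler0n.
    by case/andP: (hb (n ^ 3)%N).
  rewrite lerDl; apply: sumr_ge0 => m _.
  by rewrite mulr_ge0 ?ler0n ?invr_ge0 ?exprn_ge0 ?ler0n.
rewrite exchange_big /=; apply: ler_sum_nat => n /andP[n1 nN].
rewrite -mulr_suml; apply: ler_piMl; first by rewrite invr_ge0 exprn_ge0 ?ler0n.
have [nin|nnin] := boolP ((n ^ 3)%N \in index_iota 1 N.+1).
  rewrite (bigD1_seq (n ^ 3)%N) //= eqxx big1 ?addr0 //.
  by move=> k /negbTE ->.
rewrite big1_seq ?ler01 // => k /andP[_ kin].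
case: eqP => // kE; by move: nnin; rewrite -kE kin.
Qed.

Lemma sum6 (vv : nat -> R) N : (forall k, 0 <= vv k <= 1) -> vv 1%N = 0 ->
  \sum_(1 <= k < N.+1) vv k / k%:R ^+ 2 <= zeta R 6.
Proof.
move=> hb h1.
have z1 : 1 <= zeta R 6.
  have := zeta_le 2 (isT : (2 <= 6)%N).
  by rewrite big_nat1 (_ : (1%:R : R) = 1) // expr1n invr1.
apply: le_trans z1.
case: N => [|N]; first by rewrite big_geq // ler01.
rewrite big_ltn // h1 mul0r add0r.
apply: (le_trans (y := \sum_(2 <= k < N.+2) (k%:R ^- 2 : R))).
  apply: ler_sum_nat => k /andP[k2 _]; apply: ler_piMl.
    by rewrite invr_ge0 exprn_ge0 ?ler0n.
  by case/andP: (hb k).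
have := @sum_sq N.+1 isT; rewrite big_ltn // (_ : (1%:R : R) = 1) // expr1n invr1.
have : 0 <= (N.+1%:R : R)^-1 by rewrite invr_ge0 ler0n.
move=> H H0; move: H0; move: (\sum_(2 <= i < N.+2) (i%:R ^- 2 : R)) => S HS; move: H HS; move: (N.+1%:R^-1 : R) => y; clear hb h1; intros; lra.
Qed.
End Reals.

Theorem lemma4p2 (R : realType) (d : measure_display) (T : measurableType d)
  (P : probability T R) (X : nat -> T -> R[i])
  (* each X(p) takes values in {0, 1, w, w^2} *)
  (Xval : forall p t, prime p -> X p t \in Xvals R)
  (Xmeas : forall p v, prime p -> v \in Xvals R -> measurable [set t | X p t = v])
  (* law of X(p) *)
  (Xlaw0 : forall p, prime p -> P [set t | X p t = 0] = (delta R p)%:E)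
  (Xlaw : forall p v, prime p -> v \in behead (Xvals R) ->
            P [set t | X p t = v] = ((1 - delta R p) / 3)%:E)
  (* mutual independence of the X(p), p prime *)
  (Xindep : forall (s : seq nat) (v : nat -> R[i]),
     uniq s -> all prime s -> {in s, forall p, v p \in Xvals R} ->
     P (\bigcap_(p in [set p | p \in s]) [set t | X p t = v p]) =
     (\prod_(p <- s) P [set t | X p t = v p])%E)
  (m : nat) (m_gt0 : (0 < m)%N) :
  [/\ ((exists n : nat, m = (n ^ 3)%N) ->
          cexpect P (Xvals R) (Xmul X m) = (\prod_(p <- primes m) (1 - delta R p))%:C),
      (~ (exists n : nat, m = (n ^ 3)%N) -> cexpect P (Xvals R) (Xmul X m) = 0),
      (\prod_(p <- primes m) (1 - delta R p) =
        \prod_(p <- primes m | (p %% 3 == 1)%N) ((p%:R : R) / (p%:R + 2))),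
      (forall N : nat, \sum_(1 <= k < N.+1)
          cexpect P (Xmvals R k) (fun t => Xmul X k t / k%:R) <= (zeta R 3)%:C) &
      (forall N : nat, \sum_(1 <= k < N.+1)
          cvar P (Xmvals R k) (fun t => Xmul X k t / k%:R) <= (zeta R 6)%:C)].
Proof.
have hcube k : cc P X k != 0 -> exists n, k = (n ^ 3)%N.
  move=> /cc_cube; case: k => [|k] h; first by exists 0%N.
  exact/(cubeP (ltn0Sn k)).
split.
- move=> hc; apply: (E_cube Xval Xmeas Xlaw0 Xlaw Xindep).
  exact/(cubeP m_gt0).
- move=> hn; apply: (E_noncube Xval Xmeas Xlaw0 Xlaw Xindep).
  by apply/negP => h; apply: hn; apply/(cubeP m_gt0).
- rewrite [RHS]big_mkcond /=; apply: eq_bigr => p _; rewrite /delta.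
  case: ifP => _; last by rewrite subr0.
  have hp : (p%:R + 2 : R) != 0.
    by move: (ler0n R p); move: (p%:R : R) => x hx; apply/eqP => h; lra.
  by field.
- move=> N.
  under eq_big_nat => k /andP[k1 _] do
    rewrite (cexp_k Xval Xmeas Xlaw0 Xlaw Xindep k1).
  rewrite -rmorph_sum lecR; apply: sum3 => //.
  exact: (cc_bounds P Xval Xmeas).
- move=> N.
  under eq_big_nat => k /andP[k1 _] do
    rewrite (cvar_k Xval Xmeas Xlaw0 Xlaw Xindep k1).
  rewrite -rmorph_sum lecR; apply: sum6; last exact: vv1.
  exact: (vv_bounds P Xval Xmeas).
Qed.
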